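(* For $n\in\{3,4,5\}$, the prism $Y_n=C_n\square P_2$ satisfies $IDI(Y_n)\neq 2$.
   Context: $C_n$ is the cycle on $n$ vertices, $P_2$ the path on two vertices, and $\square$ the Cartesian product. For a finite simple connected graph $G=(V,E)$ with diameter $d$, a rank assignment is a function $f:V\to\mathbb{R}$; under $f$, the string of a vertex $v$ is the $d$-vector whose $i$-th coordinate is the sum of $f(w)$ over all vertices $w$ with $d(v,w)=i$. The ID-index $IDI(G)$ is the minimum $k$ such that there exists $f:V\to\mathbb{R}$ with $|f(V)|=k$ under which all vertices have distinct strings. *)

(* Defs.v *)
From HB Require Import structures.
From mathcomp Require Import all_boot all_order all_algebra.
From mathcomp Require Import reals.
Set Implicit Arguments. Unset Strict Implicit. Unset Printing Implicit Defensive.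
Import Order.TTheory GRing.Theory Num.Theory.

Section Graphs.
Variable T : finType.
Variable e : rel T.

Fixpoint ball (x : T) (k : nat) : {set T} :=
  match k with
  | 0 => [set x]
  | k'.+1 => ball x k' :|: [set y | [exists z in ball x k', e z y]]
  end.

(* graph distance d(x,y): least k with y within k steps of x
   (for a connected graph this is always < #|T|) *)
Definition dist (x y : T) : nat :=
  find (fun k => y \in ball x k) (iota 0 #|T|).

Definition diameter : nat := \max_(x : T) \max_(y : T) dist x y.

Definition vstring (R : realType) (f : T -> R) (v : T) : seq R :=
  [seq (\sum_(w : T | dist v w == i) f w)%R | i <- iota 1 diameter].

Definition num_values (R : realType) (f : T -> R) : nat :=
  size (undup (codom f)).

Definition id_assignment (R : realType) (f : T -> R) : Prop :=
  injective (vstring f).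

Definition IDI_is (R : realType) (k : nat) : Prop :=
  (exists f : T -> R, id_assignment f /\ num_values f = k) /\
  (forall f : T -> R, id_assignment f -> k <= num_values f).
End Graphs.

(* Prism Y_n = C_n □ P_2 on vertex set 'I_n * bool *)
Definition prism_adj (n : nat) : rel ('I_n * bool) :=
  fun u v =>
    ((u.2 == v.2) &&
       ((nat_of_ord v.1 == (u.1.+1 %% n)) || (nat_of_ord u.1 == (v.1.+1 %% n))))
    || ((u.1 == v.1) && (u.2 != v.2)).
Arguments prism_adj n : clear implicits.
Arguments IDI_is {T} e R k.

(* Main.v *)
Require Import Defs.
From HB Require Import structures.
From mathcomp Require Import all_boot all_order all_algebra.
From mathcomp Require Import reals.
Set Implicit Arguments. Unset Strict Implicit. Unset Printing Implicit Defensive.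
Import Order.TTheory GRing.Theory Num.Theory.

Lemma card_count (T : finType) (Q : pred T) : #|[pred u | Q u]| = count Q (enum T).
Proof. by rewrite enumT cardE /enum_mem size_filter; apply: eq_count. Qed.

Section Gen.
Variable T : finType.
Variable e : rel T.
Variable R : realType.

Lemma sum_two (P : pred T) (g : pred T) (a b : R) :
  (\sum_(u | P u) (if g u then b else a) =
   a *+ #|[pred u | P u && ~~ g u]| + b *+ #|[pred u | P u && g u]|)%R.
Proof.
rewrite (bigID g) /= addrC; congr (_ + _)%R.
  rewrite -(sumr_const [pred u | P u && ~~ g u]); apply: eq_bigr => u /andP[_ /negbTE ->]//.
rewrite -(sumr_const [pred u | P u && g u]); apply: eq_bigr => u /andP[_ ->]//.
Qed.

Lemma noid2 (f : T -> R) : num_values f = 2 ->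
  (forall g : T -> bool, exists v w, v != w /\ forall i, 0 < i ->
     #|[pred u | (dist e v u == i) && g u]| = #|[pred u | (dist e w u == i) && g u]| /\
     #|[pred u | (dist e v u == i) && ~~ g u]| = #|[pred u | (dist e w u == i) && ~~ g u]|) ->
  ~ id_assignment e f.
Proof.
rewrite /num_values => Hs H Hid.
case Hl: (undup (codom f)) Hs => [|a [|b [|c l]]] // _.
have fE : forall x, f x = if f x == b then b else a.
  move=> x; have: f x \in undup (codom f) by rewrite mem_undup codom_f.
  rewrite Hl !inE; case: (f x =P b) => [-> //|nb]; rewrite orbF => /eqP //.
have [v [w [vw Hvw]]] := H (fun x => f x == b).
move/negP: vw; apply; apply/eqP; apply: Hid.
rewrite /vstring; apply/eq_in_map => i; rewrite mem_iota => /andP[i1 _].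
have [H1 H2] := Hvw i i1.
rewrite (eq_bigr _ (fun u _ => fE u)) [in RHS](eq_bigr _ (fun u _ => fE u)) !sum_two.
by rewrite H1 H2.
Qed.
End Gen.

Section Ball.
Variable T : finType.
Variable e : rel T.
Variable s : seq T.
Hypothesis sP : forall x, x \in s.

Fixpoint ballb (x : T) k (y : T) : bool :=
  if k is k'.+1 then ballb x k' y || has (fun z => ballb x k' z && e z y) s
  else x == y.

Lemma ballE x k y : (y \in ball e x k) = ballb x k y.
Proof.
elim: k y => [|k IH] y /=; first by rewrite in_set1 eq_sym.
rewrite in_setU in_set IH; congr (_ || _).
apply/existsP/hasP => [[z /andP[zb ezy]]|[z _ /andP[zb ezy]]].
  by exists z => //; rewrite -IH zb.
by exists z; rewrite IH zb.
Qed.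

Lemma distE x y : dist e x y = find (fun k => ballb x k y) (iota 0 #|T|).
Proof. by rewrite /dist; apply: eq_find => k; rewrite ballE. Qed.
End Ball.

Fixpoint bools k : seq (seq bool) :=
  if k is k'.+1 then [seq x :: t | x <- [:: true; false], t <- bools k'] else [:: [::]].

Lemma bools_mem bs : bs \in bools (size bs).
Proof.
elim: bs => [|x t IH] //=.
by case: x; rewrite !mem_cat (map_f _ IH) ?orbT.
Qed.

Section Check.
Variable T : finType.
Variable e : rel T.
Variable dd : T -> T -> nat.
Variable K : nat.
Hypothesis distdd : forall x y, dist e x y = dd x y.
Hypothesis ddK : forall x y, dd x y <= K.

Definition cnt (L : seq T) (v : T) i (bs : seq bool) (b : bool) :=
  count (fun ub => (dd v ub.1 == i) && (ub.2 == b)) (zip L bs).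

Definition check (L : seq T) : bool :=
  all (fun bs =>
     let sg := fun v => [seq (cnt L v i bs true, cnt L v i bs false) | i <- iota 1 K] in
     let S := [seq (v, sg v) | v <- L] in
     has (fun p => has (fun q => (p.1 != q.1) && (p.2 == q.2)) S) S) (bools (size L)).

Lemma count_zip_map (L : seq T) (g : T -> bool) (p : pred (T * bool)) :
  count p (zip L (map g L)) = count (fun u => p (u, g u)) L.
Proof. by elim: L => //= x l ->. Qed.

Variable L : seq T.
Hypothesis Lu : uniq L.
Hypothesis LP : forall x, x \in L.

Lemma card_countL (Q : pred T) : #|[pred u | Q u]| = count Q L.
Proof.
rewrite card_count; apply/permP; apply: uniq_perm; rewrite ?enum_uniq //.
by move=> x; rewrite mem_enum LP.
Qed.

Lemma hyp_of_check : check L ->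
  forall g : T -> bool, exists v w, v != w /\ forall i, 0 < i ->
     #|[pred u | (dist e v u == i) && g u]| = #|[pred u | (dist e w u == i) && g u]| /\
     #|[pred u | (dist e v u == i) && ~~ g u]| = #|[pred u | (dist e w u == i) && ~~ g u]|.
Proof.
move=> /allP ch g.
have := ch (map g L); rewrite -(size_map g) bools_mem => /(_ isT) /=.
case/hasP => p /mapP[v vL ->] /hasP[q /mapP[w wL ->] /andP[/= vw /eqP Hs]].
exists v, w; split => // i i0.
have cE : forall x b, #|[pred u | (dist e x u == i) && (g u == b)]| = cnt L x i (map g L) b.
  by move=> x b; rewrite card_countL /cnt count_zip_map; apply: eq_count => u; rewrite /= distdd.
have gT : forall u, g u = (g u == true) by move=> u; case: (g u).
have gF : forall u, ~~ g u = (g u == false) by move=> u; case: (g u).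
rewrite (eq_card (fun u => congr1 (andb _) (gT u))) (eq_card (fun u => congr1 (andb (dist e w u == i)) (gT u))).
rewrite (eq_card (fun u => congr1 (andb _) (gF u))) (eq_card (fun u => congr1 (andb (dist e w u == i)) (gF u))).
rewrite !cE.
case: (leqP i K) => iK.
  move/eq_in_map: Hs => Hs.
  have iI : i \in iota 1 K by rewrite mem_iota i0 add1n ltnS.
  by case: (Hs i iI) => -> ->.
have z : forall x b, cnt L x i (map g L) b = 0.
  move=> x b; rewrite /cnt; apply/eqP; rewrite -leqn0 leqNgt -has_count; apply/hasP => -[u _].
  by case/andP => /eqP dE; move: (ddK x u.1); rewrite dE leqNgt iK.
by rewrite !z.
Qed.
End Check.

Definition V (n : nat) : finType := ('I_n * bool)%type.

Definition dd {n : nat} (x y : 'I_n * bool) : nat :=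
  let a := (x.1 + n - y.1) %% n in minn a (n - a) + (x.2 != y.2).

Lemma ddK n (x y : 'I_n * bool) : dd x y <= n.+1.
Proof.
rewrite /dd -addn1; apply: leq_add; last by case: (_ != _).
exact: leq_trans (geq_minr _ _) (leq_subr _ _).
Qed.

Definition LLo n (O : seq 'I_n) : seq (V n) := [seq (i, b) | i <- O, b <- [:: true; false]].
Definition LL n := LLo (ord_enum n).

Lemma LL_uniq n : uniq (LL n).
Proof.
apply: allpairs_uniq; rewrite ?ord_enum_uniq //.
by move=> [? ?] [? ?] _ _.
Qed.

Lemma LL_mem n x : x \in LL n.
Proof.
case: x => i b; apply: (@allpairs_f _ _ _ (fun i b => (i, b))); first exact: mem_ord_enum.
by case: b.
Qed.

Lemma card_V n : #|V n| = size (LL n).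
Proof. by rewrite cardE; apply/perm_size/uniq_perm; rewrite ?enum_uniq ?LL_uniq // => x; rewrite mem_enum LL_mem. Qed.

Lemma distdd_of n :
  all (fun x => all (fun y => find (fun k => ballb (prism_adj n) (LL n) x k y)
       (iota 0 (size (LL n))) == dd x y) (LL n)) (LL n) ->
  forall x y, dist (prism_adj n) x y = dd x y.
Proof.
move=> /allP H x y; have /allP := H x (LL_mem x) => /(_ y (LL_mem y)) /eqP <-.
by rewrite (distE (prism_adj n) (@LL_mem n)) card_V.
Qed.

Definition O3 : seq 'I_3 := [:: @Ordinal 3 0 isT; @Ordinal 3 1 isT; @Ordinal 3 2 isT].
Definition O4 : seq 'I_4 := [:: @Ordinal 4 0 isT; @Ordinal 4 1 isT; @Ordinal 4 2 isT; @Ordinal 4 3 isT].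
Definition O5 : seq 'I_5 := [:: @Ordinal 5 0 isT; @Ordinal 5 1 isT; @Ordinal 5 2 isT; @Ordinal 5 3 isT; @Ordinal 5 4 isT].
Lemma O3E : O3 = ord_enum 3. Proof. by apply: (inj_map val_inj); rewrite val_ord_enum. Qed.
Lemma O4E : O4 = ord_enum 4. Proof. by apply: (inj_map val_inj); rewrite val_ord_enum. Qed.
Lemma O5E : O5 = ord_enum 5. Proof. by apply: (inj_map val_inj); rewrite val_ord_enum. Qed.

Lemma dd3 : forall x y, dist (prism_adj 3) x y = dd x y.
Proof. apply: distdd_of; rewrite /LL -O3E; vm_compute; reflexivity. Qed.
Lemma dd4 : forall x y, dist (prism_adj 4) x y = dd x y.
Proof. apply: distdd_of; rewrite /LL -O4E; vm_compute; reflexivity. Qed.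
Lemma dd5 : forall x y, dist (prism_adj 5) x y = dd x y.
Proof. apply: distdd_of; rewrite /LL -O5E; vm_compute; reflexivity. Qed.

Lemma ch3 : check (@dd 3) 4 (LL 3).
Proof. rewrite /LL -O3E; vm_compute; reflexivity. Qed.
Lemma ch4 : check (@dd 4) 5 (LL 4).
Proof. rewrite /LL -O4E; vm_compute; reflexivity. Qed.
Lemma ch5 : check (@dd 5) 6 (LL 5).
Proof. rewrite /LL -O5E; vm_compute; reflexivity. Qed.

Theorem mainTheorem5 (R : realType) (n : nat) :
  n \in [:: 3; 4; 5] -> ~ IDI_is (prism_adj n) R 2.
Proof.
rewrite !inE => Hn [[f [Hid Hnv]] _]; move: Hid; apply: noid2 Hnv _.
case/or3P: Hn => /eqP ->.
- exact: (hyp_of_check dd3 (@ddK 3) (@LL_uniq 3) (@LL_mem 3) ch3).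
- exact: (hyp_of_check dd4 (@ddK 4) (@LL_uniq 4) (@LL_mem 4) ch4).
- exact: (hyp_of_check dd5 (@ddK 5) (@LL_uniq 5) (@LL_mem 5) ch5).
Qed.
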